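(* Let $N=pq$ with $p\neq q$ odd primes, and write $\left(\frac{\cdot}{N}\right)$ for the Jacobi symbol modulo $N$. Let $\mu\in\mathsf{J}(N)\setminus\mathsf{QR}(N)$ and $R_1,R_2\in\mathsf{J}(N)$. Let $\alpha_1,\alpha_2$ be integers such that $\mu^{\alpha_1}R_1\in\mathsf{QR}(N)$ and $\mu^{\alpha_2}R_2\in\mathsf{QR}(N)$. Let $\rho_1\in\mathbb{Z}_N$ be a square root of $\mu^{\alpha_1}R_1$ modulo $N$. Let $s_1,s_2\in\mathbb{Z}_N^{\times}$ and set $S_1=s_1^2 \bmod N$, $S_2=s_2^2\bmod N$. Fix an integer $i\ge 1$. Let $(x_i,y_i)$ and $(x_{i+1},y_{i+1})$ be elements of $\mathbb{Z}_N^2$ satisfying \[ \mu^{\alpha_1}R_1 S_1^{2i+1} x_i^2 + \mu^{\alpha_2}R_2 S_2^{2i+1}y_i^2 = 1 \bmod N, \qquad \mu^{\alpha_1}R_1 S_1^{2i+3} x_{i+1}^2 + \mu^{\alpha_2}R_2 S_2^{2i+3}y_{i+1}^2 = 1 \bmod N. \] Define \[ k_i=\left(\frac{1+x_i s_1^{2i+1}\rho_1}{N}\right),\qquad k_{i+1}=\left(\frac{1+x_{i+1} s_1^{2i+3}\rho_1}{N}\right), \qquad D = 1 + \mu^{\alpha_1}R_1 S_1^{2i+2} x_i x_{i+1}, \] and assume $D\in\mathbb{Z}_N^{\times}$. Set \[ x_* = \frac{x_i + S_1 x_{i+1}}{D},\qquad y_* = \frac{y_i y_{i+1}}{D}\quad(\text{in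 } \mathbb{Z}_N), \] so that $(x_*,y_* )$ is a solution of \[ \mu^{\alpha_1}R_1 S_1^{2i+1} x_*^2 + \mu^{2\alpha_2}R_2^2 S_2^{4i+4}y_*^2 = 1 \bmod N. \] Assume moreover that $1+x_i s_1^{2i+1}\rho_1$, $1+x_{i+1} s_1^{2i+3}\rho_1$ and $2 + 2y_* \mu^{\alpha_2}R_2 S_2^{2i+2}$ are units of $\mathbb{Z}_N$. Then \[ k_{i+1}= k_i \cdot \left(\frac{D}{N}\right)\cdot\left(\frac{2 + 2y_* \mu^{\alpha_2}R_2 S_2^{2i+2}}{N}\right). \]
   Context: $\mathbb{Z}_N^{\times}$ is the multiplicative group of units modulo $N$. $\mathsf{QR}(N)=\{y\in\mathbb{Z}_N^\times : \exists x\in\mathbb{Z}_N^\times,\ y=x^2 \bmod N\}$ is the set of quadratic residues, and $\mathsf{J}(N)$ is the set of elements of $\mathbb{Z}_N$ whose Jacobi symbol modulo $N$ equals $1$. In the paper's setting (the Elashry–Mu–Susilo key exchange), $R_j=\mathcal{H}(\mathrm{id}_j)$ are hashed identities, $(\mu^{\alpha_j},S_j)$ are the publicly exchanged values of party $P_j$, and $k_i$, $k_{i+1}$ are the $i$-th and $(i+1)$-th bits of the shared secret key. *)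

(* Defs.v *)
From mathcomp Require Import all_boot all_order all_algebra.
Set Implicit Arguments. Unset Strict Implicit. Unset Printing Implicit Defensive.
Import GRing.Theory.
Local Open Scope ring_scope.

Definition legendre (a p : nat) : int :=
  if (p %| a)%N then 0
  else if [exists x : 'I_p, (x * x == a %[mod p])%N] then 1 else -1.

Definition jacobi (a n : nat) : int :=
  \prod_(p <- primes n) legendre a p ^+ logn p n.

Definition jacZ (N : nat) (a : 'Z_N) : int := jacobi (val a) N.

Definition inJ (N : nat) (a : 'Z_N) : Prop := jacZ a = 1.

Definition inQR (N : nat) (y : 'Z_N) : Prop :=
  y \is a GRing.unit /\ exists x : 'Z_N, x \is a GRing.unit /\ y = x ^+ 2.

(* Main.v *)
Require Import Defs.
From mathcomp Require Import all_boot all_order all_algebra all_field all_solvable.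
From mathcomp Require Import ring.
Import GRing.Theory.
Local Open Scope ring_scope.

Lemma val_Fp {p : nat} (hp : prime p) (y : 'F_p) : (val y < p)%N.
Proof. by case: y => m /=; rewrite Fp_cast. Qed.

Lemma natr_Fp' {p : nat} (hp : prime p) (y : 'F_p) : (val y)%:R = y.
Proof. exact: natr_Zp. Qed.

Lemma legendre_Fp (p a : nat) (hp : prime p) :
  legendre a p = if (a%:R : 'F_p) == 0 then 0
     else if [exists y : 'F_p, y * y == a%:R] then 1 else -1.
Proof.
rewrite /legendre.
have -> : (p %| a)%N = ((a%:R : 'F_p) == 0).
  by rewrite -val_eqE /= val_Fp_nat.
case: ifP => // _.
congr (if _ then _ else _).
apply/existsP/existsP => [[x /eqP hx]|[y /eqP hy]].
  exists (x%:R); rewrite -natrM; apply/eqP/val_inj; rewrite /= !val_Fp_nat //.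
exists (Ordinal (val_Fp hp y)); apply/eqP => /=.
have := congr1 val hy; rewrite -[y in y * y](natr_Fp' hp) -natrM /= !val_Fp_nat //.
Qed.

Section SQ.
Variable F : finFieldType.
Hypothesis hodd : odd #|F|.

Let n := #|F|.-1.

Lemma n_gt0 : (0 < n)%N.
Proof. rewrite /n -(cardC1 (0 : F)); apply/card_gt0P; exists 1; by rewrite !inE oner_eq0. Qed.

Lemma n_even : ~~ odd n.
Proof.
have h1 : (0 < #|F|)%N by apply/card_gt0P; exists 0.
by move: hodd; rewrite /n -{1}(prednK h1) /=; case: (odd _).
Qed.

Lemma unity_nz (x : F) : x != 0 -> x ^+ n = 1.
Proof.
move=> xnz; apply: (mulIf xnz); rewrite mul1r -exprSr /n prednK ?expf_card //.
by apply/card_gt0P; exists 0.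
Qed.

Lemma exists_prim : {z : F | n.-primitive_root z}.
Proof.
pose rs := enum [pred x : F | x != 0].
have : has n.-primitive_root rs.
  apply: has_prim_root.
  - exact: n_gt0.
  - apply/allP => x; rewrite mem_enum inE => xnz; rewrite unity_rootE unity_nz //.
  - exact: enum_uniq.
  - by rewrite -cardE /n -(cardC1 (0:F)); apply: eq_leq; apply: eq_card => x; rewrite !inE.
by move=> h; exists (nth 0 rs (find n.-primitive_root rs)); apply: nth_find.
Qed.

Definition issq (x : F) := [exists y : F, y * y == x].

Lemma issq_pow (z : F) (k : nat) : n.-primitive_root z -> issq (z ^+ k) = ~~ odd k.
Proof.
move=> pz; apply/existsP/idP => [[y /eqP hy]|hk].
  have z0 : z != 0.
    apply/negP => /eqP z0; have := prim_expr_order pz.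
    by rewrite z0 expr0n eqn0Ngt n_gt0 => /eqP; rewrite eq_sym oner_eq0.
  have yz : y != 0.
    by apply/negP => /eqP y0; move: hy; rewrite y0 mul0r => /esym/eqP; rewrite expf_eq0 (negbTE z0) andbF.
  have [j hj] := prim_rootP pz (unity_nz _ yz).
  move: hy; rewrite hj -exprD => /eqP; rewrite (eq_prim_root_expr pz) => /eqP hm.
  by rewrite -(odd_mod k (negbTE n_even)) -hm odd_mod ?(negbTE n_even) // addnn odd_double.
by exists (z ^+ k./2); rewrite -exprD addnn -{2}(odd_double_half k) (negbTE hk).
Qed.

Lemma issqM (a b : F) : a != 0 -> b != 0 -> issq (a * b) = (issq a == issq b).
Proof.
move=> a0 b0; have [z pz] := exists_prim.
have [i ->] := prim_rootP pz (unity_nz _ a0).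
have [j ->] := prim_rootP pz (unity_nz _ b0).
rewrite -exprD !(issq_pow _ _ pz) oddD.
by case: (odd i); case: (odd j).
Qed.
End SQ.

Lemma legendreM (p a b : nat) : prime p -> odd p ->
  legendre (a * b) p = legendre a p * legendre b p.
Proof.
move=> hp op; rewrite !legendre_Fp // natrM.
have hF : odd #|'F_p| by rewrite card_Fp.
case: (eqVneq (a%:R : 'F_p) 0) => [->|a0]; first by rewrite mul0r eqxx mul0r.
case: (eqVneq (b%:R : 'F_p) 0) => [->|b0]; first by rewrite mulr0 eqxx mulr0.
rewrite (negbTE (mulf_neq0 a0 b0)).
have := issqM _ hF _ _ a0 b0; rewrite /issq => ->.
set ea := [exists y, _ == a%:R]; set eb := [exists y, _ == b%:R].
by case: ea; case: eb.
Qed.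

Lemma legendre_mod (r n m : nat) : (r %| n)%N -> legendre (m %% n) r = legendre m r.
Proof. by move=> rn; rewrite /legendre /dvdn !modn_dvdm. Qed.

Lemma legendre_sq (r m : nat) : prime r -> ~~ (r %| m)%N -> legendre (m * m) r = 1.
Proof.
move=> pr nd; rewrite /legendre Euclid_dvdM // orbb (negbTE nd).
have -> // : [exists x : 'I_r, (x * x == m * m %[mod r])%N].
by apply/existsP; exists (Ordinal (ltn_pmod m (prime_gt0 pr))); rewrite /= modnMm.
Qed.

Lemma jacobiM (a b n : nat) : (forall r, r \in primes n -> odd r) ->
  jacobi (a * b) n = jacobi a n * jacobi b n.
Proof.
move=> ho; rewrite /jacobi -big_split /=; apply: eq_big_seq => r hr.
rewrite legendreM ?exprMn //; first by move: hr; rewrite mem_primes => /andP[].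
exact: ho.
Qed.

Lemma jacobi_mod (m n : nat) : jacobi (m %% n) n = jacobi m n.
Proof.
rewrite /jacobi; apply: eq_big_seq => r; rewrite mem_primes => /and3P[_ _ rn].
by rewrite legendre_mod.
Qed.

Lemma jacobi_sq (m n : nat) : coprime n m -> jacobi (m * m) n = 1.
Proof.
move=> cnm; rewrite /jacobi big1_seq // => r /andP[_]; rewrite mem_primes => /and3P[pr _ rn].
rewrite legendre_sq ?expr1n //.
by rewrite -prime_coprime //; apply: coprime_dvdl cnm.
Qed.

Lemma valZM (N : nat) (h : (1 < N)%N) (x y : 'Z_N) : val (x * y) = ((val x * val y) %% N)%N.
Proof. rewrite /=; congr (_ %% _)%N; exact: Zp_cast. Qed.

Lemma jacZM (N : nat) (h : (1 < N)%N) (ho : forall r, r \in primes N -> odd r) (x y : 'Z_N) :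
  jacZ (x * y) = jacZ x * jacZ y.
Proof. by rewrite /jacZ valZM // jacobi_mod jacobiM. Qed.

Lemma jacZ_sq (N : nat) (h : (1 < N)%N) (x : 'Z_N) : x \is a GRing.unit -> jacZ (x * x) = 1.
Proof.
move=> xu; rewrite /jacZ valZM // jacobi_mod jacobi_sq //.
by move: xu; rewrite -[x in x \is a GRing.unit]natr_Zp unitZpE.
Qed.
Theorem mainTheorem1 (p q : nat) (hp : prime p) (hq : prime q) (hpq : p != q)
  (hpo : odd p) (hqo : odd q)
  (mu R1 R2 rho1 s1 s2 S1 S2 xi yi xi1 yi1 D xs ys : 'Z_(p * q))
  (alpha1 alpha2 : int) (i : nat)
  (hmuJ : inJ mu) (hmuQR : ~ inQR mu)
  (hR1 : inJ R1) (hR2 : inJ R2)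
  (hQ1 : inQR (mu ^ alpha1 * R1)) (hQ2 : inQR (mu ^ alpha2 * R2))
  (hrho : rho1 ^+ 2 = mu ^ alpha1 * R1)
  (hs1 : s1 \is a GRing.unit) (hs2 : s2 \is a GRing.unit)
  (hS1 : S1 = s1 ^+ 2) (hS2 : S2 = s2 ^+ 2)
  (hi : (1 <= i)%N)
  (heq1 : mu ^ alpha1 * R1 * S1 ^+ (2 * i + 1) * xi ^+ 2
          + mu ^ alpha2 * R2 * S2 ^+ (2 * i + 1) * yi ^+ 2 = 1)
  (heq2 : mu ^ alpha1 * R1 * S1 ^+ (2 * i + 3) * xi1 ^+ 2
          + mu ^ alpha2 * R2 * S2 ^+ (2 * i + 3) * yi1 ^+ 2 = 1)
  (hD : D = 1 + mu ^ alpha1 * R1 * S1 ^+ (2 * i + 2) * xi * xi1)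
  (hDu : D \is a GRing.unit)
  (hxs : xs = (xi + S1 * xi1) / D)
  (hys : ys = (yi * yi1) / D)
  (hu1 : 1 + xi * s1 ^+ (2 * i + 1) * rho1 \is a GRing.unit)
  (hu2 : 1 + xi1 * s1 ^+ (2 * i + 3) * rho1 \is a GRing.unit)
  (hu3 : 2 + 2 * ys * mu ^ alpha2 * R2 * S2 ^+ (2 * i + 2) \is a GRing.unit) :
  jacZ (1 + xi1 * s1 ^+ (2 * i + 3) * rho1)
  = jacZ (1 + xi * s1 ^+ (2 * i + 1) * rho1) * jacZ D
    * jacZ (2 + 2 * ys * mu ^ alpha2 * R2 * S2 ^+ (2 * i + 2)).
Proof.
have N1 : (1 < p * q)%N.
  by rewrite -[1%N]/(1 * 1)%N ltn_mul // prime_gt1.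
have ho : forall r, r \in primes (p * q) -> odd r.
  move=> r; rewrite mem_primes => /and3P[pr _]; rewrite Euclid_dvdM //.
  by case/orP; rewrite dvdn_prime2 // => /eqP ->.
set t := s1 ^+ (2 * i + 1).
have e4 : s1 ^+ (2 * i + 3) = t * s1 ^+ 2 by rewrite -exprD -addnA.
have e3 : s1 ^+ (2 * i + 2) = t * s1 by rewrite -exprSr addn1 addn2.
set r := S2 ^+ (2 * i + 1).
have f2 : S2 ^+ (2 * i + 2) = r * S2 by rewrite -exprSr addn1 addn2.
have f3 : S2 ^+ (2 * i + 3) = r * S2 ^+ 2 by rewrite -exprD -addnA.
rewrite hS1 !(exprAC s1 2) e4 e3 -hrho f3 in heq1 heq2 hD.
rewrite -/t in heq1 hD.
rewrite f2 in hu3 *; rewrite e4 in hu2 *.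
set B := mu ^ alpha2 in heq1 heq2 hu3 *.
set w := B * R2 * (r * S2) * yi * yi1.
set E := 2 + 2 * ys * B * R2 * (r * S2) in hu3 *.
set u := xi * t * rho1 in hu1 *.
set v := xi1 * (t * s1 ^+ 2) * rho1 in hu2 *.
have ED : E * D = 2 * (D + w).
  rewrite /E hys; set Di := D^-1.
  transitivity (2 * D + 2 * (yi * yi1 * B * R2 * (r * S2)) * (Di * D)); first by ring.
  rewrite /Di mulVr // mulr1 /w; ring.
have key : (1 + u) * (1 + v) * (2 * (D + w)) = (D + w + u + v) ^+ 2.
  have h1 : 1 - u ^+ 2 = B * R2 * r * yi ^+ 2 by rewrite -heq1 /u /r; ring.
  have h2 : 1 - v ^+ 2 = B * R2 * (r * S2 ^+ 2) * yi1 ^+ 2 by rewrite -heq2 /v; ring.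
  apply/eqP; rewrite -subr_eq0.
  have -> : (1 + u) * (1 + v) * (2 * (D + w)) - (D + w + u + v) ^+ 2
     = (1 - u ^+ 2) * (1 - v ^+ 2) - w ^+ 2 by rewrite hD /u /v; ring.
  by rewrite h1 h2 /w; apply/eqP; ring.
have Zu : (D + w + u + v) \is a GRing.unit.
  have : (D + w + u + v) * (D + w + u + v) \is a GRing.unit.
    by rewrite -expr2 -key -ED !unitrM hu1 hu2 hu3 hDu.
  by rewrite unitrM => /andP[].
have J1 := @jacZ_sq _ N1 _ Zu.
rewrite -expr2 -key -ED !(@jacZM _ N1 ho) in J1.
have J2 : jacZ (1 + v) * jacZ (1 + v) = 1 by rewrite -(@jacZM _ N1 ho) jacZ_sq.
transitivity (jacZ (1 + u) * jacZ (1 + v) * (jacZ E * jacZ D) * jacZ (1 + v)).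
  by rewrite J1 mul1r.
transitivity (jacZ (1 + u) * jacZ D * jacZ E * (jacZ (1 + v) * jacZ (1 + v))); first by ring.
by rewrite J2 mulr1.
Qed.
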